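(* Let $q$ be a prime power and let $n,t,m,m'$ be positive integers. Let $\mathbf{C}_2$ be a linear sum-rank code over $\mathbf{F}_q$ of block length $t$ and matrix size $m\times m'$, with dimension $k_2$ (over $\mathbf{F}_q$) and minimum sum-rank distance $d_2$. Let $\mathbf{C}_1$ be an $[n,k_1,d_1]_{q^{k_2}}$ linear code (in the Hamming metric) over $\mathbf{F}_{q^{k_2}}$. Then there is a linear sum-rank code $\mathbf{C}$ over $\mathbf{F}_q$ of block length $nt$ and matrix size $m\times m'$ whose dimension is $k_1k_2$ and whose minimum sum-rank distance is at least $d_1 d_2$.
   Context: For positive integers $a\le b$, $\mathbf{F}_q^{(a,b)}$ denotes the set of $a\times b$ matrices over $\mathbf{F}_q$. A sum-rank code of block length $t$ and matrix size $m\times m'$ over $\mathbf{F}_q$ is a subset of $\mathbf{F}_q^{(m,m')}\oplus\cdots\oplus\mathbf{F}_q^{(m,m')}$ ($t$ summands); it is linear if it is an $\mathbf{F}_q$-linear subspace, and its dimension is its $\mathbf{F}_q$-dimension. The sum-rank weight of $\mathbf{x}=(\mathbf{x}_1,\dots,\mathbf{x}_t)$ is $\sum_{i=1}^t \mathrm{rank}(\mathbf{x}_i)$, the sum-rank distance is $d_{sr}(\mathbf{x},\mathbf{y})=\sum_i\mathrm{rank}(\mathbf{x}_i-\mathbf{y}_i)$, and the minimum sum-rank distance of a code is the minimum distance between distinct codewords. An $[n,k,d]_Q$ code is a linear code of length $n$, dimension $k$ and minimum Hamming distance $d$ over $\mathbf{F}_Q$. *)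

(* Defs.v *)
From HB Require Import structures.
From mathcomp Require Import all_boot all_order all_algebra all_field.
Set Implicit Arguments. Unset Strict Implicit. Unset Printing Implicit Defensive.
Import GRing.Theory.
Local Open Scope ring_scope.

Definition srspace (F : fieldType) (t m m' : nat) := {ffun 'I_t -> 'M[F]_(m, m')}.

Definition sr_weight (F : fieldType) (t m m' : nat) (x : srspace F t m m') : nat :=
  (\sum_(i < t) \rank (x i))%N.
Definition sr_dist (F : fieldType) (t m m' : nat) (x y : srspace F t m m') : nat :=
  sr_weight (x - y).

Definition ham_weight (K : fieldType) (n : nat) (x : 'rV[K]_n) : nat :=
  #|[set i : 'I_n | x 0 i != 0]|.
Definition ham_dist (K : fieldType) (n : nat) (x y : 'rV[K]_n) : nat :=
  ham_weight (x - y).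

Definition min_dist_is (R : fieldType) (V : vectType R) (dist : V -> V -> nat) (C : {vspace V}) (d : nat) : Prop :=
  (exists x, exists y, [/\ x \in C, y \in C, x != y & dist x y = d]) /\
  (forall x y, x \in C -> y \in C -> x != y -> (d <= dist x y)%N).

Definition min_dist_ge (R : fieldType) (V : vectType R) (dist : V -> V -> nat) (C : {vspace V}) (d : nat) : Prop :=
  forall x y, x \in C -> y \in C -> x != y -> (d <= dist x y)%N.

(* Main.v *)
Require Import Defs.
From HB Require Import structures.
From mathcomp Require Import all_boot all_order all_algebra all_field.
From mathcomp Require Import all_fingroup all_solvable ring.
Set Implicit Arguments. Unset Strict Implicit. Unset Printing Implicit Defensive.
Import GRing.Theory.
Local Open Scope ring_scope.
Section Emb.
Variables (R : finFieldType) (p : nat) (h : p \in [pchar R]).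
Definition fpe (a : 'F_p) : R := in_alg (pPrimeCharType h) a.
Lemma fpe_zmod : zmod_morphism fpe.
Proof. exact: (@rmorphB _ _ (in_alg (pPrimeCharType h))). Qed.
Lemma fpe_monoid : monoid_morphism fpe.
Proof. split; [exact: (@rmorph1 _ _ (in_alg (pPrimeCharType h)))| exact: (@rmorphM _ _ (in_alg (pPrimeCharType h)))]. Qed.
HB.instance Definition _ := GRing.isZmodMorphism.Build _ _ fpe fpe_zmod.
HB.instance Definition _ := GRing.isMonoidMorphism.Build _ _ fpe fpe_monoid.
End Emb.

Lemma exists_gen (F : finFieldType) : exists a : F, forall x : F, x = 0 \/ exists n, x = a ^+ n.
Proof.
have /cyclicP[u Du] := field_unit_group_cyclic [set: {unit F}]%G.
exists (FinRing.uval u) => x; have [->|nz] := eqVneq x 0; first by left.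
right; have Ux : x \is a GRing.unit by rewrite unitfE.
pose v : {unit F} := Sub x Ux.
have : v \in <[u]>%g by rewrite -Du inE.
by case/cycleP=> n Dv; exists n; rewrite -FinRing.val_unitX -Dv.
Qed.

Lemma expf_cardX (F : finFieldType) (x : F) j : x ^+ (#|F| ^ j)%N = x.
Proof.
elim: j => [|j IH]; first by rewrite expn0 expr1.
by rewrite expnS exprM expf_card IH.
Qed.

Lemma embed (F K : finFieldType) (k : nat) : #|K| = (#|F| ^ k)%N ->
  exists psi : F -> K, [/\ {morph psi : x y / x + y}, {morph psi : x y / x * y} & psi 1 = 1].
Proof.
move=> hK.
have [p pr_p pF] := finPcharP F.
have cardF : #|F| = (p ^ logn p #|F|)%N := card_pprimeChar pF.
have pK : p \in [pchar K].
  by apply: (@card_finPcharP _ p (logn p #|F| * k)) => //; rewrite hK {1}cardF expnM.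
pose iF := fpe pF; pose iK := fpe pK.
have [a gen] := exists_gen F.
pose evF (g : {poly 'F_p}) := (map_poly iF g).[a].
have evFD g1 g2 : evF (g1 + g2) = evF g1 + evF g2 by rewrite /evF rmorphD hornerD.
have evFB g1 g2 : evF (g1 - g2) = evF g1 - evF g2 by rewrite /evF rmorphB hornerD hornerN.
have evFM g1 g2 : evF (g1 * g2) = evF g1 * evF g2 by rewrite /evF rmorphM hornerM.
have evF1 : evF 1 = 1 by rewrite /evF rmorph1 hornerC.
have surj x : exists g, evF g = x.
  case: (gen x) => [->|[n ->]]; first by exists 0; rewrite /evF rmorph0 horner0.
  by exists 'X^n; rewrite /evF map_polyXn hornerXn.
pose P0 : {poly 'F_p} := 'X^#|K| - 'X.
have mapP0 : map_poly iK P0 = \prod_(x : K) ('X - x%:P).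
  by rewrite -finField_genPoly /P0 rmorphB /= map_polyXn map_polyX.
have P0nz : P0 != 0.
  apply/eqP=> P00; move: mapP0; rewrite P00 rmorph0 => /esym/eqP.
  by apply/negP; apply: monic_neq0; apply: monic_prod_XsubC.
have evP0 : evF P0 = 0.
  by rewrite /evF /P0 rmorphB /= map_polyXn map_polyX hornerD hornerN hornerXn hornerX hK expf_cardX subrr.
pose N := size P0.
pose pr (v : 'rV['F_p]_N) := (rVpoly v != 0) && (evF (rVpoly v) == 0).
have pr0 : pr (poly_rV P0) by rewrite /pr poly_rV_K // P0nz evP0 eqxx.
case: (arg_minnP (fun v => size (rVpoly v)) pr0) => v /andP[rnz /eqP evr] minv.
set r := rVpoly v in rnz evr minv.
have rdiv g : evF g = 0 -> r %| g.
  move=> evg; apply/modp_eq0P; apply/eqP; apply/negPn/negP => hnz.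
  have evh : evF (g %% r) = 0.
    by move: evg; rewrite {1}(divp_eq g r) evFD evFM evr mulr0 add0r.
  have ltr : (size (g %% r)%R < size r)%N by rewrite ltn_modp.
  have leN : (size (g %% r)%R <= N)%N.
    by apply: leq_trans (ltnW ltr) _; apply: size_poly.
  have := minv (poly_rV (g %% r)); rewrite /pr poly_rV_K // hnz evh eqxx /=.
  by move=> /(_ isT); rewrite leqNgt ltr.
have rP0 : r %| P0 by apply: rdiv.
have : map_poly iK r %| \prod_(x <- index_enum K) ('X - x%:P).
  by rewrite -mapP0 dvdp_map.
case/dvdp_prod_XsubC => msk.
case E: (mask msk (index_enum K)) => [|b s] Hr.
  move: Hr; rewrite big_nil => /eqp_size; rewrite size_poly1 size_map_poly => sr.
  have [c Dr] : exists c, r = c%:P.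
    by exists r`_0; apply/size1_polyC; rewrite sr.
  move: evr rnz; rewrite Dr /evF map_polyC hornerC /= => /eqP.
  by rewrite fmorph_eq0 polyC_eq0 => ->.
have rootb : root (map_poly iK r) b.
  by rewrite (eqp_root Hr) root_prod_XsubC mem_head.
pose evK (g : {poly 'F_p}) := (map_poly iK g).[b].
have evKD g1 g2 : evK (g1 + g2) = evK g1 + evK g2 by rewrite /evK rmorphD hornerD.
have evKB g1 g2 : evK (g1 - g2) = evK g1 - evK g2 by rewrite /evK rmorphB hornerD hornerN.
have evKM g1 g2 : evK (g1 * g2) = evK g1 * evK g2 by rewrite /evK rmorphM hornerM.
have evK1 : evK 1 = 1 by rewrite /evK rmorph1 hornerC.
have kerK g : evF g = 0 -> evK g = 0.
  move=> /rdiv /divpK <-; rewrite evKM.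
  by move/rootP: rootb; rewrite /evK => ->; rewrite mulr0.
have surj' x : exists g, evF g == x by case: (surj x) => g /eqP; exists g.
have xP x : evF (xchoose (surj' x)) = x by apply/eqP; apply: (xchooseP (surj' x)).
pose psi x := evK (xchoose (surj' x)).
have psiE g : psi (evF g) = evK g.
  apply/eqP; rewrite -subr_eq0 -evKB; apply/eqP/kerK.
  by rewrite evFB xP subrr.
exists psi; split.
- move=> x y; rewrite -{1}(xP x) -{1}(xP y).
  by rewrite -evFD psiE evKD.
- move=> x y; rewrite -{1}(xP x) -{1}(xP y).
  by rewrite -evFM psiE evKM.
- by rewrite -evF1 psiE evK1.
Qed.
Section Greedy.
Variables (F K : finFieldType) (psi : F -> K).
Hypotheses (psiD : {morph psi : x y / x + y}) (psiM : {morph psi : x y / x * y}) (psi1 : psi 1 = 1).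

Lemma psi0 : psi 0 = 0.
Proof. by apply: (@addrI _ (psi 0)); rewrite -psiD !addr0. Qed.
Lemma psiN x : psi (- x) = - psi x.
Proof. by apply: (@addrI _ (psi x)); rewrite -psiD !subrr psi0. Qed.
Lemma psiB x y : psi (x - y) = psi x - psi y.
Proof. by rewrite psiD psiN. Qed.
Lemma psiV x : x != 0 -> psi x^-1 * psi x = 1.
Proof. by move=> nz; rewrite -psiM mulVf. Qed.

Definition G (e : nat -> K) j (c : {ffun 'I_j -> F}) : K := \sum_(i < j) psi (c i) * e i.

Lemma G_D e j (c d : {ffun 'I_j -> F}) : G e (c + d) = G e c + G e d.
Proof. by rewrite /G -big_split; apply: eq_bigr => i _; rewrite ffunE psiD mulrDl. Qed.
Lemma G_Z e j (a : F) (c : {ffun 'I_j -> F}) : G e [ffun i => a * c i] = psi a * G e c.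
Proof. by rewrite /G mulr_sumr; apply: eq_bigr => i _; rewrite ffunE psiM mulrA. Qed.
Lemma G_B e j (c d : {ffun 'I_j -> F}) : G e (c - d) = G e c - G e d.
Proof. by rewrite /G -sumrB; apply: eq_bigr => i _; rewrite !ffunE psiB mulrBl. Qed.

Lemma greedy k : #|K| = (#|F| ^ k)%N -> forall j, (j <= k)%N ->
  exists e : nat -> K, injective (@G e j).
Proof.
move=> hK; elim=> [|j IH] ltjk.
  by exists (fun _ => 0) => c d _; apply/ffunP => -[].
have [e inje] := IH (ltnW ltjk).
have F1 : (1 < #|F|)%N by apply: finNzRing_gt1.
have : ~~ ([set: K] \subset [set G e c | c in [set: {ffun 'I_j -> F}]]).
  apply/negP => /subset_leq_card; rewrite card_imset // !cardsT.
  by rewrite card_ffun card_ord hK leq_exp2l // leqNgt ltjk.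
case/subsetPn => y _ ny.
pose e' n := if n == j then y else e n.
pose rs (c : {ffun 'I_j.+1 -> F}) : {ffun 'I_j -> F} := [ffun i => c (widen_ord (leqnSn j) i)].
have Ge' c : G e' c = G e (rs c) + psi (c ord_max) * y.
  rewrite /G big_ord_recr /= /e' eqxx; congr (_ + _).
  by apply: eq_bigr => i _; rewrite ffunE /= ltn_eqF.
exists e' => c d; rewrite !Ge'.
have [eqm|nem] := eqVneq (c ord_max) (d ord_max).
  rewrite eqm => /addIr /inje rsE; apply/ffunP => i.
  have [lt|ge] := ltnP i j.
    have := congr1 (fun f : {ffun 'I_j -> F} => f (Ordinal lt)) rsE; rewrite !ffunE.
    by have -> : widen_ord (leqnSn j) (Ordinal lt) = i by apply: val_inj.
  have -> : i = ord_max by apply: val_inj; apply/eqP; rewrite eqn_leq ge -ltnS ltn_ord.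
  exact: eqm.
move=> eqG; exfalso; move/negP: ny; apply.
have dnz : d ord_max - c ord_max != 0 by rewrite subr_eq0 eq_sym.
apply/imsetP; exists [ffun i => (d ord_max - c ord_max)^-1 * (rs c - rs d) i]; first by rewrite inE.
rewrite G_Z G_B.
have -> : G e (rs c) - G e (rs d) = psi (d ord_max - c ord_max) * y.
  rewrite -[G e (rs c)](addrK (psi (c ord_max) * y)) eqG psiB; ring.
by rewrite mulrA psiV // mul1r.
Qed.
End Greedy.

Theorem theorem6 (q : nat) (F : finFieldType) (hF : #|F| = q)
    (n t m m' : nat) (hn : (0 < n)%N) (ht : (0 < t)%N) (hm : (0 < m)%N) (hm' : (0 < m')%N)
    (k2 d2 : nat) (C2 : {vspace srspace F t m m'})
    (hk2 : \dim C2 = k2) (hd2 : min_dist_is (@sr_dist F t m m') C2 d2)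
    (K : finFieldType) (hK : #|K| = (q ^ k2)%N)
    (k1 d1 : nat) (C1 : {vspace 'rV[K]_n})
    (hk1 : \dim C1 = k1) (hd1 : min_dist_is (@ham_dist K n) C1 d1) :
  exists C : {vspace srspace F (n * t) m m'},
    \dim C = (k1 * k2)%N /\ min_dist_ge (@sr_dist F (n * t) m m') C (d1 * d2).
Proof.
subst q k1 k2.
set k := \dim C2 in hK *.
have [psi [psiD psiM psi1]] := embed hK.
have [e inje] := greedy psiD psiM psi1 hK (leqnn k).
have F1 : (1 < #|F|)%N by apply: finNzRing_gt1.
have : bijective (@G F K psi e k).
  by apply: inj_card_bij inje _; rewrite card_ffun card_ord hK.
case=> Ginv GK KG.
have GinvL a y y' : Ginv (psi a * y + y') = [ffun i => a * Ginv y i] + Ginv y'.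
  by apply: inje; rewrite KG G_D // G_Z // !KG.
pose b := vbasis C2.
pose phi (y : K) : srspace F t m m' := \sum_(i < k) Ginv y i *: b`_i.
have phiL a y y' : phi (psi a * y + y') = a *: phi y + phi y'.
  rewrite /phi GinvL scaler_sumr -big_split; apply: eq_bigr => i _.
  by rewrite !ffunE scalerDl scalerA.
have phi0 : phi 0 = 0.
  have h := phiL 1 0 0; rewrite mulr0 addr0 scale1r in h.
  by apply: (@addrI _ (phi 0)); rewrite addr0 -h.
have phiD y y' : phi (y + y') = phi y + phi y'.
  by rewrite -{1}[y]mul1r -psi1 phiL scale1r.
have phiZ a y : phi (psi a * y) = a *: phi y.
  by rewrite -[psi a * y]addr0 phiL phi0 addr0.
have phi_inj : injective phi.
  move=> y y' eqp.
  have freeb : free b := basis_free (vbasisP C2).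
  have H0 : \sum_(i < k) (Ginv y i - Ginv y' i) *: b`_i = 0.
    rewrite (eq_bigr (fun i => Ginv y i *: b`_i - Ginv y' i *: b`_i)).
      by rewrite sumrB -/(phi y) -/(phi y') eqp subrr.
    by move=> i _; rewrite scalerBl.
  have eqc := (freeP freeb) _ H0.
  rewrite -[y]KG -[y']KG; congr (G _ _); apply/ffunP => i.
  by apply/eqP; rewrite -subr_eq0; apply/eqP; apply: eqc.
have phi_in y : phi y \in C2.
  apply: rpred_sum => i _; apply: rpredZ; apply: vbasis_mem.
  by apply: mem_nth; rewrite size_tuple.
have phiw y : y != 0 -> (d2 <= sr_weight (phi y))%N.
  move=> ynz; have := hd2.2 (phi y) 0 (phi_in y) (mem0v _).
  rewrite /sr_dist subr0; apply; apply/negP => /eqP h.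
  by move: ynz; rewrite (phi_inj _ _ (etrans h (esym phi0))) eqxx.
have cardE : #|{: 'I_n * 'I_t}| = (n * t)%N by rewrite card_prod !card_ord.
pose h (pr : 'I_n * 'I_t) : 'I_(n * t) := cast_ord cardE (enum_rank pr).
pose hinv (kk : 'I_(n * t)) : 'I_n * 'I_t := enum_val (cast_ord (esym cardE) kk).
have hK1 : cancel h hinv by move=> pr; rewrite /h /hinv cast_ordK enum_rankK.
have hK2 : cancel hinv h by move=> kk; rewrite /h /hinv enum_valK cast_ordKV.
pose Phi (c : 'rV[K]_n) : srspace F (n * t) m m' :=
  [ffun kk => phi (c 0 (hinv kk).1) (hinv kk).2].
have PhiD c c' : Phi (c + c') = Phi c + Phi c'.
  by apply/ffunP => kk; rewrite !ffunE mxE phiD ffunE.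
have PhiZ a c : Phi (psi a *: c) = a *: Phi c.
  by apply/ffunP => kk; rewrite !ffunE mxE phiZ ffunE.
have Phi0 : Phi 0 = 0.
  by apply/ffunP => kk; rewrite !ffunE mxE phi0 ffunE.
have Phi_inj : injective Phi.
  move=> c c' eqP'; apply/rowP => i; apply: phi_inj; apply/ffunP => l.
  have := congr1 (fun f : srspace F (n * t) m m' => f (h (i, l))) eqP'.
  by rewrite !ffunE hK1.
have Phiw c : (sr_weight (Phi c) = \sum_(i < n) sr_weight (phi (c 0%R i)))%N.
  rewrite {1}/sr_weight (reindex h) /=; last exact: onW_bij (Bijective hK1 hK2).
  rewrite /sr_weight pair_big /=; apply: eq_big => // pr _.
  by rewrite ffunE hK1.
have PhiW c : c \in C1 -> c != 0 -> (d1 * d2 <= sr_weight (Phi c))%N.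
  move=> cC cnz; rewrite Phiw.
  set A := [set i : 'I_n | c 0 i != 0].
  have hA : (d1 <= #|A|)%N.
    by have := hd1.2 c 0 cC (mem0v _) cnz; rewrite /ham_dist /ham_weight subr0.
  apply: leq_trans (leq_mul hA (leqnn d2)) _.
  rewrite -sum_nat_const big_mkcond /=; apply: leq_sum => i _.
  by rewrite inE; case: ifP => // nz; apply: phiw; rewrite nz.
pose S := [seq Phi c | c <- enum [pred c : 'rV[K]_n | c \in C1]].
pose C := (<<S>>)%VS : {vspace srspace F (n * t) m m'}.
have memC x : reflect (exists2 c, c \in C1 & x = Phi c) (x \in C).
  apply: (iffP idP).
  - move=> /(@coord_span _ _ _ (in_tuple S)) ->.
    apply: (big_ind (fun v => exists2 c, c \in C1 & v = Phi c)).
    + by exists 0; rewrite ?mem0v ?Phi0.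
    + by move=> _ _ [c1 h1 ->] [c2 h2 ->]; exists (c1 + c2); rewrite ?memvD ?PhiD.
    + move=> i _; have : (in_tuple S)`_i \in S by apply: mem_nth; exact: ltn_ord.
      case/mapP => c; rewrite mem_enum => cC ->.
      by exists (psi (coord (in_tuple S) i x) *: c); rewrite ?memvZ // PhiZ.
  - by case=> c cC ->; apply: memv_span; apply: map_f; rewrite mem_enum.
have cardC : #|C| = #|[set Phi c | c in C1]|.
  by apply: eq_card => x; apply/memC/imsetP.
rewrite card_imset in cardC; last exact: Phi_inj.
exists C; split.
  apply: (expnI F1).
  by rewrite -card_vspace cardC card_vspace hK -expnM mulnC.
move=> x y xC yC nxy; have := memvB xC yC; case/memC => c cC Dc.
rewrite /sr_dist Dc; apply: PhiW cC _; apply/negP => /eqP c0.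
by move: Dc; rewrite c0 Phi0 => /eqP; rewrite subr_eq0 (negbTE nxy).
Qed.
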